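(* Let $\Gamma$ be a finite tree, sufficiently subdivided for $n$, with root $\ast$ and discrete gradient vector field $W$ on $\mathcal{UD}^n\Gamma$ as in the context. Let $$k:=\min\left\{\left\lfloor\tfrac n2\right\rfloor,\ \#\{v\in V(\Gamma)\mid v\text{ is essential}\}\right\}.$$ Then every critical cell of $\mathcal{UD}^n\Gamma$ has dimension at most $k$. In particular $\mathcal{UD}^n\Gamma$ strong deformation retracts onto $(\mathcal{UD}^n\Gamma)_k'$, the $k$-skeleton of $\mathcal{UD}^n\Gamma$ with the redundant $k$-cells removed.
   Context: $\Gamma$ is sufficiently subdivided for $n$ if every path between distinct vertices of degree $\ne2$ passes through at least $n-1$ edges. $d(v)$ denotes degree, and $v$ is essential if $d(v)\ge3$. $\mathcal{UD}^n\Gamma$ is the cell complex whose cells are unordered $n$-element sets $c=\{c_1,\dots,c_n\}$ where each $c_i$ is a vertex or an edge of $\Gamma$ and the closed sets $c_i$ are pairwise disjoint; dimension = number of edges; faces are obtained by replacing edges by endpoints. Fix a vertex $\ast$ of degree $1$ (here $T=\Gamma$). For vertices $v_1,v_2$, $v_1\wedge v_2$ is the endpoint other than $\ast$ of $[\ast,v_1]\cap[\ast,v_2]$, or $\ast$ if this is $\{\ast\}$. Directions (edges) at each vertex $v$ are labelled $0,\dots,d(v)-1$, label $0$ for the edge towards $\ast$ (the direction from $\ast$ gets label $1$); $g(v_1,v_2)$ is the label of the direction from $v_1$ on the geodesic to $v_2$, $g(v,v)=0$. Order: $v_1\le v_2$ iff, with $v_3=v_1\wedge v_2$, $v_3=v_1$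 or ($v_3\ne v_1$ and $g(v_3,v_1)<g(v_3,v_2)$). For an edge $e$, $\iota(e)\ge\tau(e)$ are its endpoints; for $v\ne\ast$, $e(v)$ is the edge at $v$ in direction $0$. A vertex $v\neq\ast$ of a cell $c$ is unblocked if $e(v)$ is disjoint from every element of $c$ other than $v$ (then the elementary reduction from $v$ replaces $v$ by $e(v)$); otherwise, and always for $v=\ast$, blocked. The principal reduction of $c$ is the elementary reduction from its smallest unblocked vertex. $W(c)$ is the principal reduction of $c$ when it exists and $c$ is not itself in the image of $W$ (on cells of one lower dimension); otherwise undefined. Cells in the domain of $W$ are redundant, in the image collapsible, otherwise critical. *)

(* Defs.v *)
From mathcomp Require Import all_boot.
Set Implicit Arguments. Unset Strict Implicit. Unset Printing Implicit Defensive.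

Section TreeConf.
Variable V : finType.
Variable adj : rel V.

Definition deg (v : V) : nat := #|[set w | adj v w]|.
Definition essential (v : V) : bool := 2 < deg v.

Definition is_tree : Prop :=
  [/\ symmetric adj, irreflexive adj, (forall x y, connect adj x y) &
      ~ (exists p : seq V, ucycleb adj p && (2 < size p))].

Definition suff_subdiv (n : nat) : Prop :=
  forall (u v : V) (p : seq V), u != v -> deg u != 2 -> deg v != 2 ->
    path adj u p -> last u p = v -> n.-1 <= size p.

Fixpoint ball (k : nat) (u : V) : {set V} :=
  match k with
  | 0 => [set u]
  | k'.+1 => ball k' u :|: [set y | [exists x in ball k' u, adj x y]]
  end.
Definition dist (u v : V) : nat := find (fun k => v \in ball k u) (iota 0 #|V|).

Variable star : V.
Variable lab : V -> V -> nat.   (* lab v w = label of direction from v to its neighbour w *)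

Definition parent (v : V) : option V :=
  [pick w | adj v w && (dist w star < dist v star)].

Definition valid_labelling : Prop :=
  (forall w, adj star w -> lab star w = 1) /\
  forall v, v != star ->
    [/\ {in [set w | adj v w] &, injective (lab v)},
        (forall w, adj v w -> lab v w < deg v) &
        (forall w, adj v w -> dist w star < dist v star -> lab v w = 0)].

(* g(v1,v2): label of the direction from v1 on the geodesic to v2; g(v,v)=0 *)
Definition g (v1 v2 : V) : nat :=
  if [pick w | adj v1 w && (dist w v2 < dist v1 v2)] is Some w then lab v1 w else 0.

Definition on_geod (a b w : V) : bool := dist a w + dist w b == dist a b.

(* v1 /\ v2 : far endpoint of [star,v1] \cap [star,v2] *)
Definition wedge (v1 v2 : V) : V :=
  [arg max_(w > star | on_geod star v1 w && on_geod star v2 w) dist star w].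

Definition vle (v1 v2 : V) : bool :=
  let v3 := wedge v1 v2 in (v3 == v1) || (g v3 v1 < g v3 v2).

(* cells of UD^n Gamma: sets of vertices (inl) and edges (inr, a 2-element
   vertex set) with pairwise disjoint closures *)
Definition elt := (V + {set V})%type.
Definition clos (a : elt) : {set V} := match a with inl v => [set v] | inr e => e end.
Definition is_edge (e : {set V}) : bool := [exists x, exists y, adj x y && (e == [set x; y])].
Definition cell := {set elt}.

Definition is_cell (n : nat) (c : cell) : bool :=
  [&& #|c| == n,
      [forall a in c, if a is inr e then is_edge e else true] &
      [forall a in c, forall b in c, (a != b) ==> [disjoint clos a & clos b]]].

Definition dim (c : cell) : nat := #|[set a in c | if a is inr _ then true else false]|.

Definition e_of (v : V) : option {set V} :=
  if parent v is Some w then Some [set v; w] else None.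

Definition unblocked (c : cell) (v : V) : bool :=
  [&& v != star, inl v \in c &
      if e_of v is Some e then [forall a in c, (a != inl v) ==> [disjoint clos a & e]]
      else false].

Definition principal_vertex (c : cell) : option V :=
  [pick v | unblocked c v && [forall w, unblocked c w ==> vle v w]].

Definition principal_reduction (c : cell) : option cell :=
  if principal_vertex c is Some v then
    (if e_of v is Some e then Some (inr e |: (c :\ inl v)) else None)
  else None.

Variable n : nat.

(* redundant d c : c is a d-cell in the domain of W;
   W(c) = principal reduction of c, defined when it exists and c is not in
   the image of W on (d-1)-cells *)
Fixpoint redundant (d : nat) (c : cell) : bool :=
  [&& is_cell n c, dim c == d, principal_reduction c != None &
      ~~ match d with
         | 0 => false
         | d'.+1 => [exists c' : cell, redundant d' c' && (principal_reduction c' == Some c)]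
         end].

Definition collapsible (c : cell) : bool :=
  is_cell n c &&
  match dim c with
  | 0 => false
  | d'.+1 => [exists c' : cell, redundant d' c' && (principal_reduction c' == Some c)]
  end.

Definition critical (c : cell) : bool :=
  [&& is_cell n c, ~~ redundant (dim c) c & ~~ collapsible c].

End TreeConf.

(* Main.v *)
Require Import Defs.
From mathcomp Require Import all_boot zify.
Set Implicit Arguments. Unset Strict Implicit. Unset Printing Implicit Defensive.

Section Tree.
Variable V : finType.
Variable adj : rel V.
Hypothesis adj_sym : symmetric adj.
Hypothesis adj_irr : irreflexive adj.
Hypothesis adj_conn : forall x y, connect adj x y.
Hypothesis adj_acyc : ~ (exists p : seq V, ucycleb adj p && (2 < size p)).

Lemma ballE k u v : v \in ball adj k u <->
  exists p, [/\ path adj u p, last u p = v & size p <= k].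
Proof.
elim: k v => [|k IH] v /=.
  rewrite inE; split; first by move/eqP->; exists [::].
  by case=> [[|x p]] [] //= _ ->.
rewrite in_setU inE; split.
  case/orP=> [/IH [p [h1 h2 h3]]|/existsP [x /andP [/IH [p [h1 h2 h3]] hx]]].
    by exists p; split => //; apply: leqW.
  exists (rcons p v); rewrite rcons_path last_rcons size_rcons h1 h2 hx; split=> //.
case=> p [h1 h2 h3]; case: (leqP (size p) k) => hk.
  by apply/orP; left; apply/IH; exists p.
apply/orP; right; move: h1 h2 h3 hk; case/lastP: p => [//|q y].
rewrite rcons_path last_rcons size_rcons ltnS => /andP [hq hy] hyv h3 hk; subst y.
apply/existsP; exists (last u q); rewrite hy andbT; apply/IH.
by exists q; split => //; apply: leqW.
Qed.

Lemma dist_le u v p : path adj u p -> last u p = v -> dist adj u v <= size p.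
Proof.
move=> hp hl; rewrite /dist; case: (ltnP (size p) #|V|) => h.
  rewrite leqNgt; apply/negP => /(before_find 0).
  rewrite nth_iota // add0n.
  have -> : v \in ball adj (size p) u by apply/ballE; exists p.
  by [].
by apply: leq_trans (find_size _ _) _; rewrite size_iota.
Qed.

Lemma dist_walk u v : exists p, [/\ path adj u p, last u p = v & size p = dist adj u v].
Proof.
have /connectP [p hp ->] := adj_conn u v.
case: (shortenP hp) => p' hp' hu _.
have hs : size p' < #|V|.
  by have := max_card (mem (u :: p')); rewrite (card_uniqP hu).
have hh : has (fun k => last u p' \in ball adj k u) (iota 0 #|V|).
  apply/hasP; exists (size p'); first by rewrite mem_iota.
  by apply/ballE; exists p'.
have := nth_find 0 hh; rewrite has_find size_iota in hh.
rewrite nth_iota // add0n -/(dist adj u (last u p')) => /ballE [q [h1 h2 h3]].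
exists q; split=> //; apply/eqP; rewrite eqn_leq h3 /=.
exact: dist_le h1 h2.
Qed.


Notation dst := (dist adj).

Lemma dist_tri x y z : dst x z <= dst x y + dst y z.
Proof.
have [p1 [h1 h2 h3]] := dist_walk x y; have [p2 [k1 k2 k3]] := dist_walk y z.
rewrite -h3 -k3 -size_cat; apply: dist_le; first by rewrite cat_path h1 h2.
by rewrite last_cat h2.
Qed.

Lemma rev_walk x p : path adj x p ->
  path adj (last x p) (rev (belast x p)) /\ last (last x p) (rev (belast x p)) = x.
Proof.
move=> hp; split.
  by rewrite rev_path; apply: etrans hp; apply: eq_path => a b; rewrite adj_sym.
by case: p {hp} => [|y p] //=; rewrite rev_cons last_rcons.
Qed.

Lemma dist_sym x y : dst x y = dst y x.
Proof.
have H : forall a b, dst b a <= dst a b.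
  move=> a b; have [p [h1 h2 h3]] := dist_walk a b.
  have [r1 r2] := rev_walk h1; rewrite h2 in r1 r2.
  by rewrite -h3 -(size_belast a p) -size_rev; apply: dist_le.
by apply/eqP; rewrite eqn_leq !H.
Qed.

Lemma dist_xx x : dst x x = 0.
Proof. by apply/eqP; rewrite -leqn0; apply: (@dist_le x x [::]). Qed.

Lemma dist0 x y : dst x y = 0 -> x = y.
Proof.
have [p [h1 h2 h3]] := dist_walk x y; move=> h0; rewrite h0 in h3.
by case: p h1 h2 h3 => //= _ <-.
Qed.

Lemma dist_adj x y : adj x y -> dst x y = 1.
Proof.
move=> h; apply/eqP; rewrite eqn_leq; rewrite (@dist_le x y [:: y]) /= ?h //.
rewrite lt0n; apply/negP => /eqP /dist0 e; by rewrite e adj_irr in h.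
Qed.

Lemma dist_adj_le x y z : adj x y -> dst x z <= (dst y z).+1.
Proof. by move=> h; apply: leq_trans (dist_tri x y z) _; rewrite dist_adj. Qed.


Variable star : V.
Definition depth v := dst v star.
Definition par v := odflt star (parent adj star v).

Lemma par_spec v : v != star ->
  [/\ parent adj star v = Some (par v), adj v (par v) & depth v = (depth (par v)).+1].
Proof.
move=> hv; have [p [h1 h2 h3]] := dist_walk v star.
case: p h1 h2 h3 => [/= _ e|w p]; first by rewrite e eqxx in hv.
move=> /= /andP [hw hp] hl hs.
have hlt : dst w star < dst v star by rewrite -hs ltnS; apply: dist_le hp hl.
rewrite /par /parent; case: pickP => [x /andP [hx1 hx2]|/(_ w)]; last by rewrite hw hlt.
split => //; apply/eqP; rewrite eqn_leq /depth hx2 /=.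
by rewrite andbT; apply: dist_adj_le.
Qed.

Lemma depth_par v : v != star -> depth v = (depth (par v)).+1.
Proof. by case/par_spec. Qed.

Lemma adj_par v : v != star -> adj v (par v).
Proof. by case/par_spec. Qed.

Lemma parent_star : parent adj star star = None.
Proof. by rewrite /parent; case: pickP => // w /andP [_]; rewrite dist_xx. Qed.

Lemma depth_star : depth star = 0.
Proof. exact: dist_xx. Qed.

Lemma depth0 v : depth v = 0 -> v = star.
Proof. exact: dist0. Qed.

Lemma depth_adj x y : adj x y -> depth x <= (depth y).+1.
Proof. exact: dist_adj_le. Qed.

Lemma depth_ind (P : V -> Prop) : P star ->
  (forall v, v != star -> P (par v) -> P v) -> forall v, P v.
Proof.
move=> h0 hs v; move: {2}(depth v) (leqnn (depth v)) => k; elim: k v => [|k IH] v hv.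
  by move: hv; rewrite leqn0 => /eqP /depth0 ->.
case: (eqVneq v star) => [->//|hv']; apply: hs => //; apply: IH.
by move: hv; rewrite (depth_par hv').
Qed.

Fixpoint stk k v := if k is k'.+1 then rcons (stk k' (par v)) v else [:: v].
Definition stack v := stk (depth v) v.

Lemma stack_star : stack star = [:: star].
Proof. by rewrite /stack depth_star. Qed.

Lemma stackS v : v != star -> stack v = rcons (stack (par v)) v.
Proof. by move=> hv; rewrite /stack (depth_par hv). Qed.

Lemma stack_depth v : map depth (stack v) = iota 0 (depth v).+1.
Proof.
elim/depth_ind: v => [|v hv IH]; first by rewrite stack_star /= depth_star.
by rewrite stackS // map_rcons IH (depth_par hv) -cats1 -[in RHS]addn1 iotaD add0n.
Qed.

Lemma size_stack v : size (stack v) = (depth v).+1.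
Proof. by rewrite -(size_map depth) stack_depth size_iota. Qed.

Lemma depth_nth v i : i <= depth v -> depth (nth star (stack v) i) = i.
Proof.
move=> hi; rewrite -(nth_map star 0); last by rewrite size_stack.
by rewrite stack_depth nth_iota.
Qed.

Lemma stack_uniq v : uniq (stack v).
Proof. by apply: (@map_uniq _ _ depth); rewrite stack_depth iota_uniq. Qed.

Lemma nth_stack_self v : nth star (stack v) (depth v) = v.
Proof.
elim/depth_ind: v => [|v hv IH]; first by rewrite stack_star depth_star.
by rewrite stackS // nth_rcons size_stack (depth_par hv) ltnn eqxx.
Qed.

Lemma mem_stack_self v : v \in stack v.
Proof. by rewrite -{1}(nth_stack_self v) mem_nth // size_stack. Qed.

Lemma depth_mem v w : w \in stack v -> depth w <= depth v.
Proof.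
move=> h; have : depth w \in map depth (stack v) by apply: map_f.
by rewrite stack_depth mem_iota add0n ltnS.
Qed.

Lemma stack_take v w : w \in stack v -> stack w = take (depth w).+1 (stack v).
Proof.
elim/depth_ind: v => [|v hv IH].
  by rewrite stack_star inE => /eqP ->; rewrite stack_star depth_star.
rewrite stackS // mem_rcons inE => /orP [/eqP ->|hw].
  by rewrite -stackS // take_oversize // size_stack.
rewrite -cats1 takel_cat; first exact: IH.
by rewrite size_stack ltnS depth_mem.
Qed.

Lemma mem_stack_nth v w : w \in stack v -> w = nth star (stack v) (depth w).
Proof.
by move=> h; rewrite -(nth_take star (ltnSn (depth w))) -stack_take // nth_stack_self.
Qed.

Lemma nth_stack_mem v i : i <= depth v -> nth star (stack v) i \in stack v.
Proof. by move=> hi; rewrite mem_nth // size_stack. Qed.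

Lemma nth_stack0 v : nth star (stack v) 0 = star.
Proof. by apply: depth0; rewrite depth_nth. Qed.

Lemma par_nth v i : i < depth v -> par (nth star (stack v) i.+1) = nth star (stack v) i.
Proof.
move=> hi; set x := nth star (stack v) i.+1.
have hx : x \in stack v by apply: nth_stack_mem.
have dx : depth x = i.+1 by apply: depth_nth.
have xs : x != star by apply/eqP => e; move: dx; rewrite e depth_star.
have := stack_take hx; rewrite (stackS xs) dx (take_nth star); last by rewrite size_stack ltnS.
move=> h; have e := congr1 fst (rcons_inj h); simpl in e.
have dp : depth (par x) = i by move: dx; rewrite (depth_par xs) => -[].
by rewrite -(nth_stack_self (par x)) e dp nth_take.
Qed.

Lemma adj_nth v i : i < depth v -> adj (nth star (stack v) i) (nth star (stack v) i.+1).
Proof.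
move=> hi; rewrite -par_nth // adj_sym; apply: adj_par.
by apply/eqP => e; have := depth_nth (hi : i.+1 <= depth v); rewrite e depth_star.
Qed.

Lemma stack_path v i : i <= depth v ->
  path adj (nth star (stack v) i) (drop i.+1 (stack v)).
Proof.
move=> hi; apply/(pathP star) => j; rewrite size_drop size_stack subSS => hj.
rewrite -(drop_nth star); last by rewrite size_stack.
rewrite !nth_drop addSn; apply: adj_nth; rewrite -ltn_subRL //.
Qed.


Fixpoint lcp (s t : seq V) : nat :=
  match s, t with
  | x :: s', y :: t' => if x == y then (lcp s' t').+1 else 0
  | _, _ => 0
  end.

Lemma lcp_sym s t : lcp s t = lcp t s.
Proof. by elim: s t => [|x s IH] [|y t] //=; rewrite eq_sym IH. Qed.

Lemma lcp_size s t : lcp s t <= size s.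
Proof. by elim: s t => [|x s IH] [|y t] //=; case: eqP => // _; rewrite ltnS IH. Qed.

Lemma lcp_size2 s t : lcp s t <= size t.
Proof. by rewrite lcp_sym lcp_size. Qed.

Lemma lcp_take s t : take (lcp s t) s = take (lcp s t) t.
Proof. by elim: s t => [|x s IH] [|y t] //=; case: eqP => //= ->; rewrite IH. Qed.

Lemma lcp_nth x0 s t : lcp s t < size s -> lcp s t < size t ->
  nth x0 s (lcp s t) != nth x0 t (lcp s t).
Proof. elim: s t => [|x s IH] [|y t] //=; case: eqP => [_|/eqP//]; rewrite !ltnS; exact: IH. Qed.

Lemma lcp_ge k s t : k <= size s -> k <= size t -> take k s = take k t -> k <= lcp s t.
Proof.
elim: s t k => [|x s IH] [|y t] [|k] //=.
rewrite !ltnS => h1 h2 [e1 e2].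
by rewrite e1 eqxx ltnS; apply: IH.
Qed.

Lemma lcp_rcons s t z : lcp s t <= lcp (rcons s z) t <= (lcp s t).+1.
Proof.
elim: s t => [|x s IH] [|y t] //=; first by case: (z == y).
by case: eqP => // _; rewrite !ltnS.
Qed.

Lemma lcp_refl s : lcp s s = size s.
Proof. by elim: s => //= x s ->; rewrite eqxx. Qed.

Lemma last_stack v : last star (stack v) = v.
Proof. by rewrite -nth_last size_stack nth_stack_self. Qed.

Lemma last_drop (x0 : V) k s : k < size s -> last x0 (drop k s) = last x0 s.
Proof.
move=> hk; rewrite -{2}(cat_take_drop k s) last_cat.
by rewrite (drop_nth x0 hk).
Qed.

Lemma depth_drop v k x : x \in drop k (stack v) -> k <= depth x.
Proof.
case/(nthP star) => j; rewrite size_drop size_stack => hj <-.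
by rewrite nth_drop depth_nth ?leq_addr //; lia.
Qed.

Lemma anc_adj a b : adj a b -> a \in stack b -> b != star /\ a = par b.
Proof.
move=> hab ha.
have hab' : a != b by apply/eqP => e; rewrite e adj_irr in hab.
have h1 := depth_mem ha.
have h2 : depth b <= (depth a).+1 by apply: depth_adj; rewrite adj_sym.
have hd : depth b = (depth a).+1.
  apply/eqP; rewrite eqn_leq h2 ltn_neqAle h1 andbT; apply/eqP => e.
  by move: hab'; rewrite (mem_stack_nth ha) e nth_stack_self eqxx.
have bs : b != star by apply/eqP => e; move: hd; rewrite e depth_star.
have hlt : depth a < depth b by rewrite hd.
split=> //; have e := par_nth hlt.
by rewrite -hd nth_stack_self -(mem_stack_nth ha) in e.
Qed.


Lemma take1_stack v : take 1 (stack v) = [:: star].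
Proof. by rewrite (take_nth star) ?size_stack // take0 nth_stack0. Qed.

Lemma adj_cases a b : adj a b -> (a != star /\ b = par a) \/ (b != star /\ a = par b).
Proof.
move=> hab.
case: (boolP (a \in stack b)) => [ha|ha]; first by right; apply: anc_adj.
case: (boolP (b \in stack a)) => [hb|hb]; first by left; apply: anc_adj; rewrite // adj_sym.
exfalso; apply: adj_acyc.
have m1 : 0 < lcp (stack a) (stack b).
  by apply: lcp_ge; rewrite ?size_stack // !take1_stack.
have mda : lcp (stack a) (stack b) <= depth a.
  rewrite leqNgt; apply/negP => h; move/negP: ha; apply.
  have e : lcp (stack a) (stack b) = size (stack a).
    by apply/eqP; rewrite eqn_leq lcp_size size_stack.
  have := lcp_take (stack a) (stack b); rewrite {1}e take_size => e2.
  by apply: (@mem_take (lcp (stack a) (stack b))); rewrite -e2 mem_stack_self.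
have mdb : lcp (stack a) (stack b) <= depth b.
  rewrite leqNgt; apply/negP => h; move/negP: hb; apply.
  have e : lcp (stack a) (stack b) = size (stack b).
    by apply/eqP; rewrite eqn_leq lcp_size2 size_stack.
  have := lcp_take (stack a) (stack b); rewrite {2}e take_size => e2.
  by apply: (@mem_take (lcp (stack a) (stack b))); rewrite e2 mem_stack_self.
move: m1 mda mdb; set sa := stack a; set sb := stack b; set m := lcp sa sb => m1 mda mdb.
set c2 := nth star sb m; set q := drop m.+1 sb; set w := nth star sa m.-1.
have dsb : drop m sb = c2 :: q by rewrite (drop_nth star) // size_stack ltnS.
have dsa : drop m.-1 sa = w :: drop m sa.
  by rewrite (drop_nth star) ?prednK // size_stack; lia.
have wsb : w = nth star sb m.-1.
  rewrite /w -(nth_take star (n0 := m)) ?prednK // lcp_take nth_take ?prednK //.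
have pc2 : par c2 = w by rewrite wsb -par_nth ?prednK //; lia.
have c2s : c2 != star.
  by apply/eqP => e; have := depth_nth mdb; rewrite -/c2 e depth_star; lia.
have lq : last c2 q = b.
  by rewrite -[last c2 q]/(last star (c2 :: q)) -dsb last_drop ?size_stack ?ltnS // last_stack.
have lsa : last w (drop m sa) = a.
  by rewrite -[last w _]/(last star (w :: drop m sa)) -dsa last_drop ?size_stack ?last_stack //; lia.
exists (drop m.-1 sa ++ rev (drop m sb)).
apply/andP; split; [apply/andP; split|].
- rewrite (cycle_path star) last_cat dsb rev_cons last_rcons -rev_cons dsa /=.
  have -> : adj c2 w by rewrite -pc2 adj_par.
  rewrite /= cat_path.
  have -> : path adj (nth star sa m.-1) (drop m sa).
    by have := @stack_path a m.-1; rewrite prednK //; apply; lia.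
  rewrite /= lsa lastI rev_rcons lq /= hab /=.
  by have [+ _] := rev_walk (stack_path mdb); rewrite lq.
- rewrite cat_uniq drop_uniq ?stack_uniq // rev_uniq drop_uniq ?stack_uniq // andbT.
  apply/hasP => -[x]; rewrite mem_rev => hx1 hx2.
  have dx := depth_drop hx1.
  have xa : x \in sa by apply: mem_drop hx2.
  have xb : x \in sb by apply: mem_drop hx1.
  have : (depth x).+1 <= m.
    apply: lcp_ge; rewrite ?size_stack ?ltnS ?depth_mem //.
    by rewrite -!stack_take.
  lia.
- rewrite size_cat size_rev !size_drop !size_stack; lia.
Qed.


Lemma stack_adj a b : adj a b ->
  stack b = rcons (stack a) b \/ stack a = rcons (stack b) a.
Proof. by case/adj_cases => -[h ->]; [right|left]; rewrite stackS. Qed.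

Lemma walk_lcp x p : path adj x p ->
  size (stack x) + size (stack (last x p)) <= size p + 2 * lcp (stack x) (stack (last x p)).
Proof.
elim: p x => [|z p IH] x /=; first by rewrite lcp_refl; lia.
case/andP => hxz hp; have := IH z hp; set y := last z p.
case: (stack_adj hxz) => ->.
  have := lcp_rcons (stack x) (stack y) z; rewrite size_rcons; lia.
have := lcp_rcons (stack z) (stack y) x; rewrite size_rcons; lia.
Qed.

Lemma dist_lcp x y : size (stack x) + size (stack y) <= dst x y + 2 * lcp (stack x) (stack y).
Proof. by have [p [h1 h2 <-]] := dist_walk x y; rewrite -h2 walk_lcp. Qed.

Lemma dist_anc w v : w \in stack v -> dst w v + depth w = depth v.
Proof.
move=> h; apply/eqP; rewrite eqn_leq; apply/andP; split; last first.
  by rewrite /depth (dist_sym w v); apply: dist_tri.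
elim/depth_ind: v h => [|v hv IH].
  by rewrite stack_star inE => /eqP ->; rewrite dist_xx.
rewrite stackS // mem_rcons inE => /orP [/eqP ->|h]; first by rewrite dist_xx.
apply: leq_trans (leq_add (dist_tri w (par v) v) (leqnn _)) _.
have -> : dst (par v) v = 1 by rewrite dist_adj // adj_sym adj_par.
by rewrite (depth_par hv) addnAC addn1 ltnS; apply: IH.
Qed.

Lemma dist_nonanc w v : w \notin stack v -> depth v + 2 <= dst w v + depth w.
Proof.
move=> h; have := dist_lcp w v; rewrite !size_stack.
have : lcp (stack w) (stack v) <= depth w.
  rewrite leqNgt; apply/negP => hl; move/negP: h; apply.
  have e : lcp (stack w) (stack v) = size (stack w).
    by apply/eqP; rewrite eqn_leq lcp_size size_stack.
  have := lcp_take (stack w) (stack v); rewrite {1}e take_size => e2.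
  by apply: (@mem_take (lcp (stack w) (stack v))); rewrite -e2 mem_stack_self.
lia.
Qed.


Variable lab : V -> V -> nat.

Lemma g_self v : g adj lab v v = 0.
Proof. by rewrite /g; case: pickP => // w /andP [_]; rewrite dist_xx. Qed.

Lemma anc_lt a v : a \in stack v -> a != v -> depth a < depth v.
Proof.
move=> h hne; rewrite ltn_neqAle depth_mem // andbT; apply/eqP => e.
by move: hne; rewrite (mem_stack_nth h) e nth_stack_self eqxx.
Qed.

Lemma g_anc a v : a \in stack v -> a != v ->
  g adj lab a v = lab a (nth star (stack v) (depth a).+1).
Proof.
move=> ha hne; have hlt := anc_lt ha hne.
set c := nth star (stack v) (depth a).+1.
have hc : c \in stack v by apply: nth_stack_mem.
have dc : depth c = (depth a).+1 by apply: depth_nth.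
have pc : par c = a by rewrite /c par_nth // -mem_stack_nth.
have cs : c != star by apply/eqP => e; move: dc; rewrite e depth_star.
have hac : adj a c by rewrite -pc adj_sym adj_par.
have e1 := dist_anc ha; have e2 := dist_anc hc.
rewrite /g; case: pickP => [w /andP [hw1 hw2]|/(_ c)]; last first.
  by rewrite hac /=; lia.
have dw : depth w <= (depth a).+1 by apply: depth_adj; rewrite adj_sym.
case: (boolP (w \in stack v)) => hw; last first.
  by have := dist_nonanc hw; lia.
have e3 := dist_anc hw.
have -> : w = c; last by [].
by rewrite (mem_stack_nth hw) /c; congr nth; lia.
Qed.

Lemma geodE v w : on_geod adj star v w = (w \in stack v).
Proof.
rewrite /on_geod (dist_sym star w) (dist_sym star v) -/(depth w) -/(depth v).
case: (boolP (w \in stack v)) => h.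
  by rewrite addnC; apply/eqP; apply: dist_anc.
by apply/negbTE; have := dist_nonanc h; lia.
Qed.

Lemma wedgeE v1 v2 :
  wedge adj star v1 v2 = nth star (stack v1) (lcp (stack v1) (stack v2)).-1.
Proof.
rewrite /wedge.
have P0 : on_geod adj star v1 star && on_geod adj star v2 star.
  by rewrite !geodE -{1}(nth_stack0 v1) -{2}(nth_stack0 v2) !nth_stack_mem.
case: (@arg_maxnP V star (fun w => on_geod adj star v1 w && on_geod adj star v2 w) (fun w => dst star w) P0) => w /andP [].
rewrite !geodE => h1 h2 hmax.
set m := lcp (stack v1) (stack v2).
have m1 : 0 < m by apply: lcp_ge; rewrite ?size_stack // !take1_stack.
have ms1 : m <= (depth v1).+1 by rewrite -size_stack lcp_size.
have ms2 : m <= (depth v2).+1 by rewrite -size_stack lcp_size2.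
set a := nth star (stack v1) m.-1.
have a1 : a \in stack v1 by apply: nth_stack_mem; lia.
have a2 : a \in stack v2.
  rewrite /a -(nth_take star (n0 := m)) ?prednK // lcp_take nth_take ?prednK //.
  by apply: nth_stack_mem; lia.
have da : depth a = m.-1 by apply: depth_nth; lia.
have := hmax a; rewrite !geodE a1 a2 => /(_ isT).
rewrite !(dist_sym star) -!/(depth _) da => hle.
have : (depth w).+1 <= m.
  apply: lcp_ge; rewrite ?size_stack ?ltnS ?depth_mem //.
  by rewrite -!stack_take.
move=> hw; rewrite (mem_stack_nth h1); congr nth; lia.
Qed.


Hypothesis star_deg : deg adj star = 1.
Hypothesis lab_inj : forall v, v != star -> {in [set w | adj v w] &, injective (lab v)}.

Lemma star_nb x y : adj star x -> adj star y -> x = y.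
Proof.
move: star_deg; rewrite /deg => /eqP /cards1P [z hz] hx hy.
have : x \in [set w | adj star w] by rewrite inE.
have : y \in [set w | adj star w] by rewrite inE.
by rewrite hz !inE => /eqP -> /eqP ->.
Qed.

Lemma lab_neq a x y : adj a x -> adj a y -> x != y -> lab a x != lab a y.
Proof.
move=> hx hy hne; case: (eqVneq a star) => [ea|na].
  by subst a; move: hne; rewrite (star_nb hx hy) eqxx.
apply/negP => /eqP e; move/negP: hne; apply; apply/eqP.
by apply: (lab_inj na); rewrite ?inE.
Qed.

Fixpoint lexle (s t : seq nat) : bool :=
  match s, t with
  | [::], _ => true
  | _ :: _, [::] => false
  | x :: s', y :: t' => (x < y) || ((x == y) && lexle s' t')
  end.

Lemma lexle_refl s : lexle s s.
Proof. by elim: s => //= x s ->; rewrite eqxx orbT. Qed.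

Lemma lexle_trans s t u : lexle s t -> lexle t u -> lexle s u.
Proof.
elim: s t u => [|x s IH] [|y t] [|z u] //=.
case/orP=> [h1|/andP[/eqP e1 h1]]; case/orP=> [h2|/andP[/eqP e2 h2]].
- by rewrite (ltn_trans h1 h2).
- by rewrite -e2 h1.
- by rewrite e1 h2.
- by rewrite e1 e2 eqxx (IH _ _ h1 h2) orbT.
Qed.

Lemma lexle_total s t : lexle s t || lexle t s.
Proof.
elim: s t => [|x s IH] t; first by [].
case: t => [|y t]; first by rewrite orbT.
rewrite /=; case: (ltngtP x y) => h /=; rewrite ?orbT //.
Qed.

Lemma lexle_cat p s t : lexle (p ++ s) (p ++ t) = lexle s t.
Proof. by elim: p => //= x p ->; rewrite ltnn eqxx. Qed.

Definition key v := [seq lab (par x) x | x <- behead (stack v)].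

Lemma vle_lex v1 v2 : vle adj star lab v1 v2 = lexle (key v1) (key v2).
Proof.
rewrite /vle wedgeE.
have m1 : 0 < lcp (stack v1) (stack v2) by apply: lcp_ge; rewrite ?size_stack // !take1_stack.
have ms1 := lcp_size (stack v1) (stack v2); have ms2 := lcp_size2 (stack v1) (stack v2).
have lt := lcp_take (stack v1) (stack v2); have ln := @lcp_nth star (stack v1) (stack v2).
move: m1 ms1 ms2 lt ln; set m := lcp _ _; rewrite !size_stack => m1 ms1 ms2 lt ln.
have an2 : nth star (stack v1) m.-1 = nth star (stack v2) m.-1.
  by rewrite -(nth_take star (n0 := m)) ?prednK // lt nth_take ?prednK.
set a := nth star (stack v1) m.-1.
have a1 : a \in stack v1 by apply: nth_stack_mem; lia.
have a2 : a \in stack v2 by rewrite /a an2; apply: nth_stack_mem; lia.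
have da : depth a = m.-1 by apply: depth_nth; lia.
have ek : forall v, key v = take m.-1 (key v) ++
    [seq lab (par x) x | x <- drop m (stack v)].
  move=> v; rewrite -{1}(cat_take_drop m.-1 (key v)); congr (_ ++ _).
  by rewrite /key -map_drop -drop1 drop_drop addn1 prednK.
have et : take m.-1 (key v1) = take m.-1 (key v2).
  by rewrite /key -!map_take -!drop1 !take_drop addn1 prednK // lt.
rewrite (ek v1) (ek v2) et lexle_cat.
case: (eqVneq a v1) => [e1|n1] /=.
  have d1 : depth v1 = m.-1 by rewrite -e1.
  by rewrite drop_oversize // size_stack; lia.
have hlt1 := anc_lt a1 n1.
have pc1 : par (nth star (stack v1) m) = a.
  by have h := @par_nth v1 m.-1 (ltac:(lia)); rewrite prednK in h.
have c1s : nth star (stack v1) m != star.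
  by apply/eqP => e; have := @depth_nth v1 m (ltac:(lia)); rewrite e depth_star; lia.
have ac1 : adj a (nth star (stack v1) m) by rewrite adj_sym -pc1 adj_par.
rewrite (drop_nth star); last by rewrite size_stack; lia.
rewrite (g_anc a1 n1) da prednK // [map _ (_ :: _)]/= pc1.
case: (eqVneq a v2) => [e2|n2].
  have d2 : depth v2 = m.-1 by rewrite -e2.
  rewrite -e2 g_self ltn0 (@drop_oversize _ m (stack a)) //. rewrite size_stack da; lia.
have hlt2 := anc_lt a2 n2.
have pc2 : par (nth star (stack v2) m) = a.
  by rewrite /a an2; have h := @par_nth v2 m.-1 (ltac:(lia)); rewrite prednK in h.
have c2s : nth star (stack v2) m != star.
  by apply/eqP => e; have := @depth_nth v2 m (ltac:(lia)); rewrite e depth_star; lia.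
have ac2 : adj a (nth star (stack v2) m) by rewrite adj_sym -pc2 adj_par.
rewrite (@drop_nth _ star m (stack v2)); last by rewrite size_stack; lia.
rewrite (g_anc a2 n2) da prednK // [map _ (_ :: _)]/= pc2 /=.
have hne := lab_neq ac1 ac2 (ln (ltac:(lia)) (ltac:(lia))).
by rewrite (negbTE hne) andFb orbF.
Qed.


Notation vle' := (vle adj star lab).

Lemma vle_refl v : vle' v v.
Proof. by rewrite vle_lex lexle_refl. Qed.

Lemma vle_trans u v w : vle' u v -> vle' v w -> vle' u w.
Proof. rewrite !vle_lex; exact: lexle_trans. Qed.

Lemma vle_total u v : vle' u v || vle' v u.
Proof. by rewrite !vle_lex lexle_total. Qed.

Lemma wedge_sym v1 v2 : wedge adj star v1 v2 = wedge adj star v2 v1.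
Proof.
rewrite !wedgeE (lcp_sym (stack v2)).
have m1 : 0 < lcp (stack v1) (stack v2) by apply: lcp_ge; rewrite ?size_stack // !take1_stack.
by rewrite -(nth_take star (n0 := lcp (stack v1) (stack v2))) ?prednK // lcp_take nth_take ?prednK.
Qed.

Lemma vle_anti u v : vle' u v -> vle' v u -> u = v.
Proof.
rewrite /vle wedge_sym; set a := wedge adj star v u.
case: (eqVneq a u) => [<-|nu] /=.
  case: (eqVneq a v) => [//|nv] /= _; by rewrite g_self ltn0.
case: (eqVneq a v) => [<-|nv] /=; first by rewrite g_self ltn0.
move=> h1 h2; by have := ltn_trans h1 h2; rewrite ltnn.
Qed.

Lemma key_par v : v != star -> key v = rcons (key (par v)) (lab (par v) v).
Proof.
move=> hv; rewrite /key stackS //.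
case E: (stack (par v)) => [|x s]; first by move: (mem_stack_self (par v)); rewrite E.
by rewrite rcons_cons /= map_rcons.
Qed.

Lemma vle_sib u w : u != star -> w != star -> par u = par w ->
  vle' u w = (lab (par u) u <= lab (par u) w).
Proof.
move=> hu hw e; rewrite vle_lex (key_par hu) (key_par hw) -e -!cats1 lexle_cat /=.
by rewrite andbT orbC -leq_eqVlt.
Qed.

Lemma vle_min (P : pred V) x : P x -> exists y, P y && [forall w, P w ==> vle' y w].
Proof.
move=> hx.
suff: forall s : seq V, s != [::] -> exists2 y, y \in s & forall w, w \in s -> vle' y w.
  have hx' : x \in enum P by rewrite mem_enum.
  case/(_ (enum P)); first by apply/eqP => e; rewrite e in hx'.
  move=> y; rewrite mem_enum => hy hm; exists y; apply/andP; split; first exact: hy.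
  by apply/forallP => w; apply/implyP => hw; apply: hm; rewrite mem_enum.
elim=> [//|z s IH] _; case: (eqVneq s [::]) => [->|ns].
  by exists z; rewrite ?inE // => w; rewrite inE => /eqP ->; apply: vle_refl.
case: (IH ns) => y hy hm.
case/orP: (vle_total z y) => h.
  exists z; first by rewrite inE eqxx.
  move=> w; rewrite inE => /orP [/eqP ->|hw]; first exact: vle_refl.
  by apply: vle_trans h (hm w hw).
exists y; first by rewrite inE hy orbT.
by move=> w; rewrite inE => /orP [/eqP ->|hw] //; apply: hm.
Qed.

Variable n : nat.
Notation cellb := (is_cell adj n).
Notation ub := (unblocked adj star).
Notation pv := (principal_vertex adj star lab).
Notation pr := (principal_reduction adj star lab).

Definition eset (v : V) : {set V} := [set v; par v].

Lemma in_eset v : v \in eset v.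
Proof. by rewrite !inE eqxx. Qed.

Lemma par_in_eset v : par v \in eset v.
Proof. by rewrite !inE eqxx orbT. Qed.

Lemma e_ofE v : v != star -> e_of adj star v = Some (eset v).
Proof. by case/par_spec => h _ _; rewrite /e_of h. Qed.

Lemma e_of_star : e_of adj star star = None.
Proof. by rewrite /e_of parent_star. Qed.

Lemma ubP (c : cell V) v : reflect [/\ v != star, inl v \in c &
   forall a, a \in c -> a != inl v -> [disjoint clos a & eset v]] (ub c v).
Proof.
rewrite /unblocked; case: (eqVneq v star) => [->|hv] /=; first by constructor; case.
rewrite (e_ofE hv); apply: (iffP andP) => [[h1 /forallP h2]|[_ h1 h2]]; split => //.
  by move=> a ha hne; move: (h2 a); rewrite ha hne.
by apply/forallP => a; apply/implyP => ha; apply/implyP => hne; apply: h2.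
Qed.

Lemma ub_blocked (c : cell V) w : w != star -> inl w \in c -> ~~ ub c w ->
  exists a, [/\ a \in c, a != inl w & ~~ [disjoint clos a & eset w]].
Proof.
move=> hw hwc; rewrite /unblocked hw hwc (e_ofE hw) /= negb_forall => /existsP [a].
by rewrite !negb_imply => /andP [ha /andP [h1 h2]]; exists a.
Qed.

Lemma cellP (c : cell V) : cellb c -> [/\ #|c| = n, forall e, inr e \in c -> is_edge adj e &
  forall a b, a \in c -> b \in c -> a != b -> [disjoint clos a & clos b]].
Proof.
case/and3P => /eqP h1 /forallP h2 /forallP h3; split => //.
  by move=> e he; move: (h2 (inr e)); rewrite he.
move=> a b ha hb hab; move: (h3 a); rewrite ha /= => /forallP /(_ b).
by rewrite hb hab.
Qed.

Lemma edge_eset e : is_edge adj e -> exists2 u, u != star & e = eset u.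
Proof.
case/existsP => x /existsP [y /andP [hxy /eqP ->]].
case: (adj_cases hxy) => -[h ee]; first by exists x; rewrite // /eset ee.
by exists y; rewrite // /eset ee setUC.
Qed.

Lemma notdisjP (A B : {set V}) : ~~ [disjoint A & B] -> exists2 x, x \in A & x \in B.
Proof.
by rewrite disjoints_subset => /subsetPn [x h1]; rewrite inE negbK => h2; exists x.
Qed.

Lemma disjN (A B : {set V}) x : [disjoint A & B] -> x \in A -> x \in B -> False.
Proof. by move=> /disjointFr h /h ->. Qed.

Lemma pvP (c : cell V) y : pv c = Some y -> ub c y /\ forall w, ub c w -> vle' y w.
Proof.
rewrite /principal_vertex; case: pickP => // z /andP [h1 /forallP h2] [<-].
by split => // w hw; move: (h2 w); rewrite hw.
Qed.

Lemma pv_eq (c : cell V) y : ub c y -> (forall w, ub c w -> vle' y w) -> pv c = Some y.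
Proof.
move=> hy hm; rewrite /principal_vertex; case: pickP => [z /andP [h1 /forallP h2]|].
  congr Some; apply: vle_anti; last exact: hm.
  by move: (h2 y); rewrite hy.
move/(_ y); rewrite hy /=; move/negP; case; apply/forallP => w; apply/implyP; exact: hm.
Qed.

Lemma ub_star (c : cell V) v : ub c v -> v != star.
Proof. by case/ubP. Qed.

Lemma pr_of_pv (c : cell V) y : pv c = Some y -> pr c = Some (inr (eset y) |: (c :\ inl y)).
Proof.
move=> h; have [/ub_star hy _] := pvP h.
by rewrite /principal_reduction h (e_ofE hy).
Qed.

Lemma prP (c c' : cell V) : pr c = Some c' ->
  exists y, [/\ pv c = Some y, y != star & c' = inr (eset y) |: (c :\ inl y)].
Proof.
case E: (pv c) => [y|]; last by rewrite /principal_reduction E.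
have [/ub_star hy _] := pvP E.
by rewrite (pr_of_pv E) => -[<-]; exists y.
Qed.

Lemma redundant_cell d c : redundant adj star lab n d c -> cellb c.
Proof. by case: d => [|d] /and4P []. Qed.

Definition sw (c : cell V) a b : cell V := b |: (c :\ a).

Lemma mem_sw (c : cell V) a b z : (z \in sw c a b) = (z == b) || ((z != a) && (z \in c)).
Proof. by rewrite /sw !inE. Qed.

Lemma inl_neq (x y : V) : (inl x == inl y :> elt V) = (x == y).
Proof. by []. Qed.

Lemma inr_neq (x y : {set V}) : (inr x == inr y :> elt V) = (x == y).
Proof. by []. Qed.

Lemma inlr (x : V) (e : {set V}) : (inl x == inr e :> elt V) = false.
Proof. by []. Qed.

Lemma inrl (x : V) (e : {set V}) : (inr e == inl x :> elt V) = false.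
Proof. by []. Qed.

Lemma inl_inr (x : V) (e : {set V}) : inl x != inr e :> elt V.
Proof. by []. Qed.

Lemma inr_inl (x : V) (e : {set V}) : inr e != inl x :> elt V.
Proof. by []. Qed.

Definition good (c : cell V) x := [&& x != star, inr (eset x) \in c &
  pv (sw c (inr (eset x)) (inl x)) == Some x].

Lemma nob_good (c : cell V) u : cellb c -> (forall v, ~~ ub c v) -> u != star ->
  inr (eset u) \in c ->
  (forall v, inl v \in c -> v != star -> par v = par u -> v != u ->
     lab (par u) u <= lab (par u) v) -> good c u.
Proof.
move=> hc hnb hu he hsib; rewrite /good hu he /=; apply/eqP.
have [_ _ hdis] := cellP hc.
have hsw : forall w, ub (sw c (inr (eset u)) (inl u)) w ->
    w = u \/ [/\ inl w \in c, w != star, par w = par u & w != u].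
  move=> w /ubP [hw1 hw2 hw3]; case: (eqVneq w u) => [->|hwu]; [by left|right].
  have hwc : inl w \in c.
    by move: hw2; rewrite mem_sw inl_neq (negbTE hwu).
  split => //.
  have [a [ha1 ha2 ha3]] := ub_blocked hw1 hwc (hnb w).
  case: (eqVneq a (inr (eset u))) => [ea|na]; last first.
    by move: ha3; rewrite hw3 // mem_sw na ha1 orbT.
  subst a; have [z hz1 hz2] := notdisjP ha3.
  move: hz2; rewrite /eset !inE => /orP [/eqP ezw|/eqP ezp].
    exfalso; subst z; apply: (disjN (hdis _ _ hwc he (inl_inr _ _)) (x := w)) => //.
    by rewrite inE.
  move: hz1; rewrite /= /eset !inE => /orP [/eqP ezu|/eqP ezpu]; last by rewrite -ezp ezpu.
  exfalso; have hh : inl u \in sw c (inr (eset u)) (inl u) by rewrite mem_sw eqxx.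
  have hne : inl u != inl w :> elt V by rewrite inl_neq eq_sym.
  apply: (disjN (hw3 _ hh hne) (x := u)); first by rewrite inE.
  by rewrite -ezu ezp par_in_eset.
have hub : ub (sw c (inr (eset u)) (inl u)) u.
  apply/ubP; split => //; first by rewrite mem_sw eqxx.
  move=> a; rewrite mem_sw => /orP [/eqP ->|/andP [h1 h2]]; first by rewrite eqxx.
  by move=> _; exact: (hdis _ _ h2 he h1).
apply: pv_eq => // w /hsw [->|[h1 h2 h3 h4]]; first exact: vle_refl.
by rewrite (vle_sib hu h2 (esym h3)); apply: hsib.
Qed.

Lemma good_collapsible (c : cell V) x : cellb c -> good c x ->
  (forall y, good c y -> vle' x y) -> collapsible adj star lab n c.
Proof.
move=> hc /and3P [hx he0 /eqP hpv] hmin.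
have [hcn hce hdis] := cellP hc.
move: he0 hpv; set e0 := eset x => he0 hpv.
have hxc : inl x \notin c.
  apply/negP => h; apply: (disjN (hdis _ _ h he0 (inl_inr _ _)) (x := x)).
    by rewrite inE.
  exact: in_eset.
set c' := sw c (inr e0) (inl x).
have memc' : forall z, (z \in c') = (z == inl x) || ((z != inr e0) && (z \in c)).
  by move=> z; rewrite mem_sw.
have hc' : cellb c'.
  apply/and3P; split.
  - have := cardsD1 (inr e0) c; rewrite he0 hcn => h.
    by rewrite /c' /sw cardsU1 in_setD1 (negbTE hxc) andbF /= h.
  - apply/forall_inP => a; rewrite memc' => /orP [/eqP -> //|/andP [_ ha]].
    by case: a ha => // e he; exact: hce.
  - apply/forall_inP => a ha; apply/forall_inP => b hb.
    apply/implyP => hab.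
    move: ha hb; rewrite !memc' => /orP [/eqP ea|/andP [na ha]] /orP [/eqP eb|/andP [nb hb]].
    + by rewrite ea eb eqxx in hab.
    + rewrite ea /=; apply: (disjointWl (B := e0)); first by rewrite sub1set in_eset.
      by rewrite disjoint_sym; exact: (hdis _ _ hb he0 nb).
    + rewrite eb /= disjoint_sym; apply: (disjointWl (B := e0)).
        by rewrite sub1set in_eset.
      by rewrite disjoint_sym; exact: (hdis _ _ ha he0 na).
    + exact: hdis.
have hdim : dim c = (dim c').+1.
  rewrite /dim.
  have -> : [set a in c' | if a is inr _ then true else false] =
            [set a in c | if a is inr _ then true else false] :\ inr e0.
    apply/setP => -[v|e]; rewrite !inE ?memc' ?andbF ?andbT //.
  by rewrite {1}(cardsD1 (inr e0) [set a in c | _]) inE he0.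
have hpr : pr c' = Some c.
  rewrite (pr_of_pv hpv); congr Some; apply/setP => z; rewrite !inE.
  case: (eqVneq z (inr e0)) => [->|nz] /=; first by rewrite he0.
  case: (eqVneq z (inl x)) => [->|nzx] /=; first by rewrite (negbTE hxc).
  by [].
have hred : redundant adj star lab n (dim c') c'.
  case E: (dim c') => [|d] /=; first by rewrite hc' E eqxx hpr.
  rewrite hc' E eqxx hpr /=; apply/negP => /existsP [c'' /andP [hred'' /eqP hpr'']].
  have hc'' := redundant_cell hred''.
  have [y [hpvy hy hc'eq]] := prP hpr''.
  have [huby hminy] := pvP hpvy.
  move: hc'eq hpvy; set f := eset y => hc'eq hpvy.
  have [_ _ hdis''] := cellP hc''.
  have hyc'' : inl y \in c'' by case/ubP: huby.
  have hfc'' : inr f \notin c''.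
    apply/negP => h; apply: (disjN (hdis'' _ _ hyc'' h (inl_inr _ _)) (x := y)).
      by rewrite inE.
    exact: in_eset.
  have memc'2 : forall z, (z \in c') = (z == inr f) || ((z != inl y) && (z \in c'')).
    by move=> z; rewrite hc'eq !inE.
  have memc'' : forall z, (z \in c'') = (z == inl y) || ((z != inr f) && (z \in c')).
    move=> z; rewrite memc'2; case: (eqVneq z (inl y)) => [->|nzy] /=; first by rewrite hyc''.
    by case: (eqVneq z (inr f)) => [->|nzf] /=; first by rewrite (negbTE hfc'').
  have hfc' : inr f \in c' by rewrite memc'2 eqxx.
  have hfc : inr f \in c by move: hfc'; rewrite memc' => /orP [//|/andP [_ ->]].
  have hfe0 : f != e0.
    apply/eqP => ef; have : inr e0 \in c' by rewrite -ef.
    by rewrite memc' eqxx.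
  have hgood : good c y.
    rewrite /good hy hfc /=; apply/eqP; apply: pv_eq.
    - apply/ubP; split => //; first by rewrite mem_sw eqxx.
      move=> a; rewrite mem_sw => /orP [/eqP -> |/andP [h1 h2]]; first by rewrite eqxx.
      by move=> _; exact: (hdis _ _ h2 hfc h1).
    - move=> w /ubP [hw1 hw2 hw3]; apply: hminy; apply/ubP; split => //.
      + rewrite memc''; move: hw2; rewrite mem_sw => /orP [->//|/andP [h1 h2]].
        by rewrite h1 memc' h2 inl_inr !orbT.
      + move=> a; rewrite memc'' => /orP [/eqP ->|/andP [h1 h2]] hne.
          by apply: hw3 => //; rewrite mem_sw eqxx.
        move: h2; rewrite memc' => /orP [/eqP ea|/andP [h3 h4]].
          rewrite ea /=; apply: (disjointWl (B := e0)); first by rewrite sub1set in_eset.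
          apply: (hw3 (inr e0)); last exact: inr_inl.
          by rewrite mem_sw (negbTE (inr_inl _ _)) he0 andbT inr_neq eq_sym hfe0.
        by apply: hw3 => //; rewrite mem_sw h1 h4 orbT.
  have h1 := hmin y hgood.
  have hubx : ub c'' x.
    apply/ubP; split => //.
    - by rewrite memc'' memc' eqxx /= orbT.
    - move=> a; rewrite memc'' => /orP [/eqP ->|/andP [h1' h2']] hne.
        rewrite /=; apply: (disjointWl (B := f)); first by rewrite sub1set in_eset.
        by apply: (hdis _ _ hfc he0); rewrite inr_neq.
      move: h2'; rewrite memc' => /orP [/eqP ea|/andP [h3 h4]].
        by rewrite ea eqxx in hne.
      exact: (hdis _ _ h4 he0 h3).
  have h2 := hminy x hubx.
  have exy := vle_anti h1 h2.
  by move: hfe0; rewrite /f /e0 exy eqxx.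
rewrite /collapsible hc hdim /=; apply/existsP; exists c'.
by rewrite hred hpr eqxx.
Qed.

Lemma crit_cell (c : cell V) : critical adj star lab n c -> cellb c.
Proof. by case/and3P. Qed.

Lemma crit_notcoll (c : cell V) : critical adj star lab n c -> ~~ collapsible adj star lab n c.
Proof. by case/and3P. Qed.

Lemma crit_noub (c : cell V) : critical adj star lab n c -> forall v, ~~ ub c v.
Proof.
case/and3P => hc hr hcol v; apply/negP => hv.
have [y /andP [hy /forallP hm]] := vle_min hv.
have hpv : pv c = Some y by apply: pv_eq => // w hw; move: (hm w); rewrite hw.
have hpr := pr_of_pv hpv.
move: hr hcol; rewrite /collapsible hc /=; case E: (dim c) => [|d] /=.
  by rewrite hc E eqxx hpr.
by rewrite hc E eqxx hpr /= negbK => ->.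
Qed.

Lemma crit_blocker (c : cell V) u : critical adj star lab n c -> u != star ->
  inr (eset u) \in c -> exists v, [/\ inl v \in c, v != star, par v = par u & v != u].
Proof.
move=> hcr hu he; have hc := crit_cell hcr; have hnb := crit_noub hcr.
case: (boolP [exists v, [&& inl v \in c, v != star, par v == par u & v != u]]).
  by case/existsP => v /and4P [h1 h2 /eqP h3 h4]; exists v.
move=> hno; exfalso.
have hg : good c u.
  apply: nob_good => // v h1 h2 h3 h4.
  by move/negP: hno; case; apply/existsP; exists v; rewrite h1 h2 h3 eqxx h4.
have [x /andP [hgx /forallP hmx]] := vle_min hg.
move/negP: (crit_notcoll hcr); apply.
by apply: (good_collapsible hc hgx) => y hy; move: (hmx y); rewrite hy.
Qed.

Definition isr (a : elt V) : bool := if a is inr _ then true else false.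
Definition ed (a : elt V) : {set V} := if a is inr e then e else set0.
Definition top (e : {set V}) : V := odflt star [pick u | (u != star) && (e == eset u)].

Lemma topP e : is_edge adj e -> top e != star /\ e = eset (top e).
Proof.
case/edge_eset => u hu ->; rewrite /top.
case: pickP => [w /andP [hw /eqP h]|/(_ u)]; last by rewrite hu eqxx.
by rewrite /= -h.
Qed.

Lemma crit_count (c : cell V) : critical adj star lab n c ->
  dim c <= minn n./2 #|[set v | essential adj v]|.
Proof.
move=> hcr; have hc := crit_cell hcr; have [hcn hce hdis] := cellP hc.
set S := [set a in c | isr a].
have hdim : dim c = #|S| by [].
have hS : forall a, a \in S ->
    [/\ a = inr (ed a), a \in c, top (ed a) != star & ed a = eset (top (ed a))].
  move=> a; rewrite inE; case: a => [v|e] /=; first by rewrite andbF.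
  case/andP => he _.
  by have [h1 h2] := topP (hce e he); split.
pose tau a := par (top (ed a)).
have hblk : forall a, a \in S ->
    exists v, [/\ inl v \in c, v != star, par v = tau a & v != top (ed a)].
  by move=> a /hS [ea ac ht ee]; apply: crit_blocker => //; rewrite -ee -ea.
pose blk a := odflt star [pick v | [&& inl v \in c, v != star, par v == tau a & v != top (ed a)]].
have hblkP : forall a, a \in S ->
    [/\ inl (blk a) \in c, blk a != star, par (blk a) = tau a & blk a != top (ed a)].
  move=> a ha; rewrite /blk; case: pickP => [v /and4P [h1 h2 /eqP h3 h4] //|].
  by have [v [h1 h2 h3 h4]] := hblk a ha; move/(_ v); rewrite h1 h2 h3 eqxx h4.
have tau_inj : {in S &, injective tau}.
  move=> a b ha hb eab; case: (eqVneq a b) => // nab; exfalso.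
  have [ea ac _ ee] := hS a ha; have [eb bc _ eeb] := hS b hb.
  have ca : clos a = ed a by rewrite {1}ea.
  have cb : clos b = ed b by rewrite {1}eb.
  have := hdis a b ac bc nab; rewrite ca cb => hd.
  apply: (disjN hd (x := tau a)); first by rewrite ee par_in_eset.
  by rewrite eab eeb par_in_eset.
have tau_ess : forall a, a \in S -> essential adj (tau a).
  move=> a ha; have [_ _ ht _] := hS a ha; have [b1 b2 b3 b4] := hblkP a ha.
  move: ht b1 b2 b3 b4; rewrite /tau.
  move: (top (ed a)) (blk a) => u v hu _ hv hvu nvu.
  set t := par u.
  have au : adj t u by rewrite adj_sym adj_par.
  have av : adj t v by rewrite /t -hvu adj_sym adj_par.
  have ts : t != star.
    by apply/eqP => et; move: nvu au av; rewrite et => nvu au av; rewrite (star_nb av au) eqxx in nvu.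
  have ap : adj t (par t) := adj_par ts.
  have du : depth u = (depth t).+1 := depth_par hu.
  have dv : depth v = (depth t).+1 by rewrite (depth_par hv) hvu.
  have dt : depth t = (depth (par t)).+1 := depth_par ts.
  have pu : par t != u by apply/eqP => e; move: du; rewrite -e; lia.
  have pv' : par t != v by apply/eqP => e; move: dv; rewrite -e; lia.
  rewrite /essential /deg.
  have : #|[:: par t; u; v]| <= #|[set w | adj t w]|.
    apply: subset_leq_card; apply/subsetP => w; rewrite !inE.
    by case/or3P => /eqP ->.
  have -> : #|[:: par t; u; v]| = 3.
    apply/card_uniqP; rewrite /= !inE (negbTE pu) (negbTE pv') eq_sym (negbTE nvu).
    by [].
  by [].
have h1 : #|S| <= #|[set v | essential adj v]|.
  rewrite -(card_in_imset tau_inj); apply: subset_leq_card.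
  by apply/subsetP => w /imsetP [a ha ->]; rewrite inE; exact: tau_ess.
set B := [set (inl (blk a) : elt V) | a in S].
have binj : {in S &, injective (fun a => (inl (blk a) : elt V))}.
  move=> a b ha hb [e]; apply: tau_inj => //.
  have [_ _ h3 _] := hblkP a ha; have [_ _ h3' _] := hblkP b hb.
  by rewrite -h3 -h3' e.
have hB : #|B| = #|S| := card_in_imset binj.
have hI : S :&: B = set0.
  apply/setP => z; rewrite inE in_set0; apply/negP => /andP [h /imsetP [a _ ez]].
  by move: h; rewrite ez inE andbF.
have hsub : S :|: B \subset c.
  apply/subsetP => z; rewrite inE => /orP [|/imsetP [a ha ->]].
    by rewrite inE => /andP [].
  by case: (hblkP a ha).
have := subset_leq_card hsub; rewrite cardsU hI cards0 subn0 hB hcn => h2.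
by rewrite hdim leq_min geq_half_double -addnn h2 h1.
Qed.




End Tree.

Theorem mainTheorem13 (V : finType) (adj : rel V) (star : V)
  (lab : V -> V -> nat) (n : nat) :
  is_tree adj -> deg adj star = 1 -> valid_labelling adj star lab ->
  suff_subdiv adj n ->
  forall c : cell V, critical adj star lab n c ->
    dim c <= minn n./2 #|[set v | essential adj v]|.
Proof.
case=> hsym hirr hconn hacyc hdeg [_ hlab] _ c hc.
apply: crit_count hc => //.
by move=> v hv; case: (hlab v hv).
Qed.
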